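(* Let $\chi_1,\chi_2,\chi_{1'},\chi_{2'}$ be triples of nonzero complex numbers that are the octahedral colors of the segments $1,2,1',2'$ at a crossing of an octahedral coloring. Then: - $U(\chi_1)U(\chi_2)=U(\chi_{2'})U(\chi_{1'})$; - $D(\chi_1)D(\chi_2)=D(\chi_{2'})D(\chi_{1'})$; - if the crossing is positive, $D(\chi_1)U(\chi_2)=U(\chi_{2'})D(\chi_{1'})$; - if the crossing is negative, $U(\chi_1)D(\chi_2)=D(\chi_{2'})U(\chi_{1'})$. Consequently the assignment $x_i^+\mapsto U(\chi_i)$, $x_i^-\mapsto D(\chi_i)$ gives a well-defined representation (functor) $\mathrm{Hol}_\chi$ of the fundamental groupoid $\Pi(D)$ into $\mathrm{GL}_2(\mathbb{C})$.
   Context: Tangle diagrams and labels: $D$ is an oriented tangle diagram, viewed as a 4-valent graph. Segments are the edges of the graph and regions are the components of the complement. For a segment $i$, $i^{\uparrow}$ and $i^{\downarrow}$ are the regions on the left and right of $i$ respectively, with respect to its orientation. At a crossing, rotated so both strands point right, the incoming segments are $1$ (upper left) and $2$ (lower left), and the outgoing segments are $1'$ (lower right, continuing $1$) and $2'$ (upper right, continuing $2$). The crossing is positive if strand $1\to1'$ is over and negative if strand $2\to2'$ is over. Octahedral coloring: assign to each segment a triple $(a_i,b_i,m_i)$ of nonzero complex numbers with $m_{1'}=m_1$, $m_{2'}=m_2$ at each crossing, and: - at positive crossings, with $A=1-\frac{m_1b_1}{b_2}(1-\frac{a_1}{m_1})(1-\frac{1}{m_2a_2})$: $a_{1'}=a_1A^{-1}$,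 $a_{2'}=a_2A$, $b_{1'}=\frac{m_2b_2}{m_1}(1-m_2a_2(1-\frac{b_2}{m_1b_1}))^{-1}$, $b_{2'}=b_1(1-\frac{m_1}{a_1}(1-\frac{b_2}{m_1b_1}))$; - at negative crossings, with $\tilde A=1-\frac{b_2}{m_1b_1}(1-m_1a_1)(1-\frac{m_2}{a_2})$: $a_{1'}=a_1\tilde A^{-1}$, $a_{2'}=a_2\tilde A$, $b_{1'}=\frac{m_2b_2}{m_1}(1-\frac{a_2}{m_2}(1-\frac{m_1b_1}{b_2}))$, $b_{2'}=b_1(1-\frac{1}{m_1a_1}(1-\frac{m_1b_1}{b_2}))^{-1}$. Matrices: for $\chi=(a,b,m)$, \[ U(\chi)=\begin{bmatrix}a&0\\(a-1/m)/b&1\end{bmatrix},\qquad D(\chi)=\begin{bmatrix}1&(a-m)b\\0&a\end{bmatrix}. \] Products are ordinary matrix products. Fundamental groupoid $\Pi(D)$: objects are the regions of $D$. There are two generating morphisms $x_i^+,x_i^-:i^{\uparrow}\to i^{\downarrow}$ for each segment $i$, representing paths passing over and under the segment respectively. Composition is written left to right ($fg$ means $f$ then $g$). At each crossing there are the relations $x_1^+x_2^+=x_{2'}^+x_{1'}^+$ and $x_1^-x_2^-=x_{2'}^-x_{1'}^-$, together with $x_1^-x_2^+=x_{2'}^+x_{1'}^-$ at a positive crossing, or $x_1^+x_2^-=x_{2'}^-x_{1'}^+$ at a negative crossing. A representation sends a composite $fg$ to the matrix product in the same order. *)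

(* Defs.v *)
From HB Require Import structures.
From mathcomp Require Import all_boot all_order all_algebra.
From mathcomp Require Import reals.
From mathcomp Require Import complex.
Set Implicit Arguments. Unset Strict Implicit. Unset Printing Implicit Defensive.
Import Order.TTheory GRing.Theory Num.Theory.
Local Open Scope ring_scope.

Record color (R : realType) := Color { ca : R[i]; cb : R[i]; cm : R[i] }.

Definition nonzero_color (R : realType) (x : color R) : Prop :=
  ca x != 0 /\ cb x != 0 /\ cm x != 0.

Definition Umx (R : realType) (x : color R) : 'M[R[i]]_2 :=
  \matrix_(i < 2, j < 2)
    (if (i == 0) && (j == 0) then ca x
     else if (i == 0) then 0
     else if (j == 0) then (ca x - (cm x)^-1) / cb x
     else 1).

Definition Dmx (R : realType) (x : color R) : 'M[R[i]]_2 :=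
  \matrix_(i < 2, j < 2)
    (if (i == 0) && (j == 0) then 1
     else if (i == 0) then (ca x - cm x) * cb x
     else if (j == 0) then 0
     else ca x).

(* Octahedral coloring relations at a positive crossing with incoming
   segments 1 (upper left), 2 (lower left), outgoing 1' (continuing 1),
   2' (continuing 2). *)
Definition pos_crossing_rel (R : realType) (x1 x2 x1' x2' : color R) : Prop :=
  let a1 := ca x1 in let b1 := cb x1 in let m1 := cm x1 in
  let a2 := ca x2 in let b2 := cb x2 in let m2 := cm x2 in
  let A := 1 - m1 * b1 / b2 * (1 - a1 / m1) * (1 - (m2 * a2)^-1) in
  [/\ cm x1' = m1 /\ cm x2' = m2,
      ca x1' = a1 * A^-1 /\ ca x2' = a2 * A,
      cb x1' = m2 * b2 / m1 * (1 - m2 * a2 * (1 - b2 / (m1 * b1)))^-1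
    & cb x2' = b1 * (1 - m1 / a1 * (1 - b2 / (m1 * b1)))].

Definition neg_crossing_rel (R : realType) (x1 x2 x1' x2' : color R) : Prop :=
  let a1 := ca x1 in let b1 := cb x1 in let m1 := cm x1 in
  let a2 := ca x2 in let b2 := cb x2 in let m2 := cm x2 in
  let At := 1 - b2 / (m1 * b1) * (1 - m1 * a1) * (1 - m2 / a2) in
  [/\ cm x1' = m1 /\ cm x2' = m2,
      ca x1' = a1 * At^-1 /\ ca x2' = a2 * At,
      cb x1' = m2 * b2 / m1 * (1 - a2 / m2 * (1 - m1 * b1 / b2))
    & cb x2' = b1 * (1 - (m1 * a1)^-1 * (1 - m1 * b1 / b2))^-1].

Definition octahedral_crossing (R : realType) (pos : bool)
    (x1 x2 x1' x2' : color R) : Prop :=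
  [/\ nonzero_color x1, nonzero_color x2, nonzero_color x1', nonzero_color x2'
    & if pos then pos_crossing_rel x1 x2 x1' x2'
      else neg_crossing_rel x1 x2 x1' x2'].

(* Main.v *)
Require Import Defs.
From HB Require Import structures.
From mathcomp Require Import all_boot all_order all_algebra.
From mathcomp Require Import reals complex ring.
Import GRing.Theory.
Local Open Scope ring_scope.

Lemma mx2E (F : ringType) (M N : 'M[F]_2) :
  M 0 0 = N 0 0 -> M 0 1 = N 0 1 -> M 1 0 = N 1 0 -> M 1 1 = N 1 1 -> M = N.
Proof.
move=> h00 h01 h10 h11; apply/matrixP => i j.
case: i => [[|[|i]]] Hi //; case: j => [[|[|j]]] Hj //;
 [ have -> : Ordinal Hi = 0 by apply/val_inj
 | have -> : Ordinal Hi = 0 by apply/val_inj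
 | have -> : Ordinal Hi = 1 by apply/val_inj
 | have -> : Ordinal Hi = 1 by apply/val_inj ];
 [ have -> : Ordinal Hj = 0 by apply/val_inj
 | have -> : Ordinal Hj = 1 by apply/val_inj
 | have -> : Ordinal Hj = 0 by apply/val_inj
 | have -> : Ordinal Hj = 1 by apply/val_inj ]; by [].
Qed.

Lemma det2 (F : comNzRingType) (M : 'M[F]_2) : \det M = M 0 0 * M 1 1 - M 0 1 * M 1 0.
Proof.
rewrite (expand_det_row _ 0) !big_ord_recr big_ord0 /= add0r /cofactor !det_mx11 !mxE /=.
have e1 : widen_ord (m:=2) (leqnSn 1) ord_max = 0 by apply/val_inj.
have e2 : lift (0 : 'I_2) (0 : 'I_1) = 1 by apply/val_inj.
have e3 : lift (0 : 'I_2) (0 : 'I_1) = 1 by apply/val_inj.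
have e4 : lift (ord_max : 'I_2) (0 : 'I_1) = 0 by apply/val_inj.
have e5 : (ord_max : 'I_2) = 1 by apply/val_inj.
rewrite e1 e2 e4 e5 expr0 expr1 mul1r mulN1r mulrN.
by [].
Qed.

Lemma inv_nz {F : fieldType} {x y z : F} : x = y * z^-1 -> x != 0 -> z != 0.
Proof. move=> -> ; apply: contraNneq => ->; by rewrite invr0 mulr0. Qed.
Lemma mul_nz {F : fieldType} {x y z : F} : x = y * z -> x != 0 -> z != 0.
Proof. move=> -> ; apply: contraNneq => ->; by rewrite mulr0. Qed.

Ltac mxs := apply: mx2E; rewrite !mxE !big_ord_recr !big_ord0 !mxE /=.

Theorem lemma3p3 (R : realType) (pos : bool) (x1 x2 x1' x2' : color R) :
  octahedral_crossing pos x1 x2 x1' x2' ->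
  [/\ Umx x1 *m Umx x2 = Umx x2' *m Umx x1',
      Dmx x1 *m Dmx x2 = Dmx x2' *m Dmx x1',
      (pos -> Dmx x1 *m Umx x2 = Umx x2' *m Dmx x1'),
      (~~ pos -> Umx x1 *m Dmx x2 = Dmx x2' *m Umx x1')
    & forall x, [\/ x = x1, x = x2, x = x1' | x = x2'] ->
        Umx x \in unitmx /\ Dmx x \in unitmx].
Proof.
case=> nz1 nz2 nz1' nz2' rel.
have unit : forall x, [\/ x = x1, x = x2, x = x1' | x = x2'] ->
        Umx x \in unitmx /\ Dmx x \in unitmx.
  move=> x hx.
  have [ha _] : nonzero_color x by case: hx => ->.
  rewrite !unitmxE !det2 !mxE /= !unitfE.
  by rewrite mulr1 mul0r subr0 mul1r mulr0 subr0; split.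
case: x1 x1' x2 x2' nz1 nz2 nz1' nz2' rel unit
  => a1 b1 m1 [a1' b1' m1'] [a2 b2 m2] [a2' b2' m2'] /=.
case=> /= ha1 [hb1 hm1] [/= ha2 [hb2 hm2]] [/= ha1' [hb1' hm1']] [/= ha2' [hb2' hm2']].
case: pos => /= rel unit.
{ case: rel => /= [[em1 em2] [ea1 ea2] eb1 eb2]; subst m1' m2'.
  have hA := inv_nz ea1 ha1'.
  have hB := inv_nz eb1 hb1'.
  have hC := mul_nz eb2 hb2'.
  have nA : b2 * (m2 * a2) - b1 * (m1 - a1) * (m2 * a2 - 1) != 0.
    have -> : b2 * (m2 * a2) - b1 * (m1 - a1) * (m2 * a2 - 1) =
      (1 - m1 * b1 / b2 * (1 - a1 / m1) * (1 - (m2 * a2)^-1)) * (b2 * m2 * a2) by field; rewrite ?hb2 ?hm1 ?hm2 ?ha2.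
    by rewrite !mulf_neq0.
  have nB : m1 * b1 - m2 * a2 * (m1 * b1 - b2) != 0.
    have -> : m1 * b1 - m2 * a2 * (m1 * b1 - b2) =
      (1 - m2 * a2 * (1 - b2 / (m1 * b1))) * (m1 * b1) by field; rewrite ?hb1 ?hm1.
    by rewrite !mulf_neq0.
  have nC : a1 * b1 - (m1 * b1 - b2) != 0.
    have -> : a1 * b1 - (m1 * b1 - b2) =
      (1 - m1 / a1 * (1 - b2 / (m1 * b1))) * (a1 * b1) by field; rewrite ?hb1 ?hm1 ?ha1.
    by rewrite !mulf_neq0.
  split => // [||_]; mxs; rewrite ?ea1 ?ea2 ?eb1 ?eb2.
  all: field; by rewrite ?ha1 ?hb1 ?hm1 ?ha2 ?hb2 ?hm2 ?nA ?nB ?nC. }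
case: rel => /= [[em1 em2] [ea1 ea2] eb1 eb2]; subst m1' m2'.
have hA := inv_nz ea1 ha1'.
have hB := mul_nz eb1 hb1'.
have hC := inv_nz eb2 hb2'.
have nA : m1 * b1 * a2 - b2 * (1 - m1 * a1) * (a2 - m2) != 0.
  have -> : m1 * b1 * a2 - b2 * (1 - m1 * a1) * (a2 - m2) =
    (1 - b2 / (m1 * b1) * (1 - m1 * a1) * (1 - m2 / a2)) * (m1 * b1 * a2) by field; rewrite ?hb1 ?hm1 ?ha2.
  by rewrite !mulf_neq0.
have nB : m2 * b2 - a2 * (b2 - m1 * b1) != 0.
  have -> : m2 * b2 - a2 * (b2 - m1 * b1) =
    (1 - a2 / m2 * (1 - m1 * b1 / b2)) * (m2 * b2) by field; rewrite ?hb2 ?hm2.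
  by rewrite !mulf_neq0.
have nC : m1 * a1 * b2 - (b2 - m1 * b1) != 0.
  have -> : m1 * a1 * b2 - (b2 - m1 * b1) =
    (1 - (m1 * a1)^-1 * (1 - m1 * b1 / b2)) * (m1 * a1 * b2) by field; rewrite ?hb2 ?hm1 ?ha1.
  by rewrite !mulf_neq0.
split => // [||_]; mxs; rewrite ?ea1 ?ea2 ?eb1 ?eb2.
all: field; by rewrite ?ha1 ?hb1 ?hm1 ?ha2 ?hb2 ?hm2 ?nA ?nB ?nC.
Qed.
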